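(* Let $X$ be a topological vector space over $\mathbb{K}$, let $M\subset X$, and let $\alpha\ge\aleph_0$ be a cardinal with $w(X)\le\alpha$. Then $M$ is $\alpha$-dense-lineable if and only if $M$ is $\alpha$-infinitely $\alpha$-dense-lineable.
   Context: The weight $w(X)$ is the smallest cardinality of a base for the topology of $X$. $M$ is $\beta$-dense-lineable if there is a dense linear subspace $Y$ of $X$ with $\dim(Y)=\beta$ and $Y\subset M\cup\{0\}$. For cardinals $\alpha\ge\aleph_0$ and $\beta$, $M$ is $\alpha$-infinitely $\beta$-dense-lineable if there is a family $\{Y_\kappa\}_{\kappa<\alpha}$ of dense linear subspaces of $X$, each of dimension $\beta$, with $Y_\kappa\subset M\cup\{0\}$ for each $\kappa<\alpha$ and $Y_{\kappa_1}\cap Y_{\kappa_2}=\{0\}$ for $\kappa_1\neq\kappa_2$. *)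

(* Defs.v *)
From HB Require Import structures.
From mathcomp Require Import all_boot all_order all_algebra.
From mathcomp Require Import all_classical all_reals all_analysis.
Set Implicit Arguments. Unset Strict Implicit. Unset Printing Implicit Defensive.
Import Order.TTheory GRing.Theory Num.Theory.
Local Open Scope classical_set_scope.
Local Open Scope ring_scope.

(* Cardinals are represented by index types: a cardinal kappa is the
   cardinality of a type A. *)

Section Lineability.
Variables (K : numFieldType) (X : topologicalLmodType K).

Definition lin_subspace (Y : set X) : Prop :=
  Y 0 /\ (forall x y, Y x -> Y y -> Y (x + y)) /\
  (forall (a : K) x, Y x -> Y (a *: x)).

Definition lin_indep (B : Type) (b : B -> X) : Prop :=
  forall (n : nat) (f : 'I_n -> B) (c : 'I_n -> K), injective f ->
    \sum_(i < n) c i *: b (f i) = 0 -> forall i, c i = 0.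

Definition lin_span (B : Type) (b : B -> X) : set X :=
  [set x | exists (n : nat) (f : 'I_n -> B) (c : 'I_n -> K),
             x = \sum_(i < n) c i *: b (f i)].

Definition has_dim (Y : set X) (B : Type) : Prop :=
  exists b : B -> X, lin_indep b /\ lin_span b = Y.

(* w(X) <= |A| : X has a base of its topology of cardinality <= |A|,
   i.e. a base indexed (possibly with repetitions) by A *)
Definition weight_le (A : Type) : Prop :=
  exists Bs : A -> set X, (forall a, open (Bs a)) /\
    (forall (U : set X) (x : X), open U -> U x ->
       exists a, Bs a x /\ Bs a `<=` U).

Definition dense_lineable (B : Type) (M : set X) : Prop :=
  exists Y : set X, lin_subspace Y /\ dense Y /\ has_dim Y B /\
    Y `<=` M `|` [set 0].

Definition inf_dense_lineable (A B : Type) (M : set X) : Prop :=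
  exists Y : A -> set X,
    (forall k, lin_subspace (Y k) /\ dense (Y k) /\ has_dim (Y k) B /\
               Y k `<=` M `|` [set 0]) /\
    (forall k1 k2, k1 <> k2 -> Y k1 `&` Y k2 = [set 0]).

End Lineability.

Definition infinite_card (A : Type) : Prop :=
  exists f : nat -> A, injective f.

(* Main.v *)
Require Import Defs.
From HB Require Import structures.
From mathcomp Require Import all_boot all_order all_algebra.
From mathcomp Require Import all_classical all_reals all_analysis.
Local Open Scope classical_set_scope.

Definition choosef {T U : Type} (u0 : U) (R : T -> U -> Prop) (x : T) : U :=
  match pselect (exists y, R x y) with
  | left p => proj1_sig (cid p)
  | right _ => u0 end.

Lemma choosefP {T U : Type} (u0 : U) (R : T -> U -> Prop) (x : T) :
  (exists y, R x y) -> R x (choosef u0 R x).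
Proof.
rewrite /choosef; case: pselect => // p _; exact: (proj2_sig (cid p)).
Qed.
Arguments choosefP {T U} u0 {R x}.

Definition injon {T U : Type} (S : set T) (S' : set U) (f : T -> U) :=
  (forall x, S x -> S' (f x)) /\ (forall x y, S x -> S y -> f x = f y -> x = y).

Lemma comparability (T : Type) (t0 : T) (S S' : set T) :
  (exists f, injon S S' f) \/ (exists g, injon S' S g).
Proof.
pose P := fun G : set (T * T) =>
  (forall p, G p -> S p.1 /\ S' p.2) /\
  (forall x y y', G (x, y) -> G (x, y') -> y = y') /\
  (forall x x' y, G (x, y) -> G (x', y) -> x = x').
have [|A0 [[PA1 [PA2 PA3]] Amax]] := @Zorn_bigcup _ P.
  move=> F FP Ftot; split; [|split].
  - by move=> p [G FG Gp]; exact: (FP G FG).1.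
  - move=> x y y' [G1 FG1 G1p] [G2 FG2 G2p].
    have [G12|G21] := Ftot _ _ FG1 FG2.
    + exact: (FP G2 FG2).2.1 x y y' (G12 _ G1p) G2p.
    + exact: (FP G1 FG1).2.1 x y y' G1p (G21 _ G2p).
  - move=> x x' y [G1 FG1 G1p] [G2 FG2 G2p].
    have [G12|G21] := Ftot _ _ FG1 FG2.
    + exact: (FP G2 FG2).2.2 x x' y (G12 _ G1p) G2p.
    + exact: (FP G1 FG1).2.2 x x' y G1p (G21 _ G2p).
have [Hdom|Hdom] := pselect (forall x, S x -> exists y, A0 (x, y)).
  left; pose f := choosef t0 (fun x y => A0 (x, y)).
  have Af x : S x -> A0 (x, f x).
    by move=> Sx; exact: (choosefP t0 (R := fun a b => A0 (a, b)) (Hdom x Sx)).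
  exists f; split.
  - by move=> x Sx; case: (PA1 _ (Af x Sx)).
  - move=> x y Sx Sy E.
    by apply: (PA3 x y (f x)); [exact: Af|rewrite E; exact: Af].
have [Hran|Hran] := pselect (forall y, S' y -> exists x, A0 (x, y)).
  right; pose g := choosef t0 (fun y x => A0 (x, y)).
  have Ag y : S' y -> A0 (g y, y).
    by move=> Sy; exact: (choosefP t0 (R := fun a b => A0 (b, a)) (Hran y Sy)).
  exists g; split.
  - by move=> x Sx; case: (PA1 _ (Ag x Sx)).
  - move=> x y Sx Sy E.
    by apply: (PA2 (g x) x y); [exact: Ag|rewrite E; exact: Ag].
exfalso.
move: Hdom => /existsNP[x /not_implyP[Sx /forallNP nx]].
move: Hran => /existsNP[y /not_implyP[Sy' /forallNP ny]].
apply: (Amax (A0 `|` [set (x, y)])).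
  split; first by move=> p Ap; left.
  by move=> /(_ (x, y) (or_intror erefl)) /nx.
split; [|split].
- by move=> p [/PA1 //|->].
- move=> a b b' [Hb|Eb] [Hb'|Eb'].
  + exact: PA2 Hb Hb'.
  + by case: Eb' => ? ?; subst; case: (nx _ Hb).
  + by case: Eb => ? ?; subst; case: (nx _ Hb').
  + by case: Eb => _ ->; case: Eb' => _ ->.
- move=> a a' b [Hb|Eb] [Hb'|Eb'].
  + exact: PA3 Hb Hb'.
  + by case: Eb' => ? ?; subst; case: (ny _ Hb).
  + by case: Eb => ? ?; subst; case: (ny _ Hb').
  + by case: Eb => -> _; case: Eb' => -> _.
Qed.

Section Hess.
Variables (T : Type) (i : nat -> T) (ii : injective i).

Let t0 := i 0%N.
Definition Dom (G : set ((T * T) * T)) x := exists y, G ((x, x), y).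
Definition HQ (G : set ((T * T) * T)) :=
  [/\ (forall p y y', G (p, y) -> G (p, y') -> y = y'),
      (forall p p' y, G (p, y) -> G (p', y) -> p = p'),
      (forall p y, G (p, y) -> [/\ Dom G p.1, Dom G p.2 & Dom G y]),
      (forall x x', Dom G x -> Dom G x' -> exists y, G ((x, x'), y)) &
      (exists d0 d1 d2, [/\ Dom G d0, Dom G d1, Dom G d2 &
         [/\ d0 <> d1, d0 <> d2 & d1 <> d2]])].
Definition HP G := G = set0 \/ HQ G.

Lemma Dom_mono G G' : G `<=` G' -> Dom G `<=` Dom G'.
Proof. by move=> GG' x [y Gy]; exists y; apply: GG'. Qed.
Arguments Dom_mono {G G'}.

Lemma HP_chain : forall F : set (set ((T * T) * T)),
  F `<=` HP -> total_on F subset -> HP (\bigcup_(X in F) X).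
Proof.
move=> F FP Ftot.
have [ne|e] := pselect (exists G q, F G /\ G q); last first.
  left; apply/seteqP; split=> // q [G FG Gq]; apply: e; by exists G, q.
have QG G q : F G -> G q -> HQ G.
  move=> FG Gq; case: (FP G FG) => // G0; by rewrite G0 in Gq.
have DU x : Dom (\bigcup_(X in F) X) x -> exists2 G, F G & Dom G x.
  by move=> [y [G FG Gy]]; exists G => //; exists y.
have DU' G x : F G -> Dom G x -> Dom (\bigcup_(X in F) X) x.
  by move=> FG; apply: Dom_mono => q Gq; exists G.
right; split.
- move=> p y y' [G1 FG1 G1p] [G2 FG2 G2p].
  have [G12|G21] := Ftot _ _ FG1 FG2.
  + case: (QG _ _ FG2 G2p) => H1 _ _ _ _; exact: H1 (G12 _ G1p) G2p.
  + case: (QG _ _ FG1 G1p) => H1 _ _ _ _; exact: H1 G1p (G21 _ G2p).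
- move=> p p' y [G1 FG1 G1p] [G2 FG2 G2p].
  have [G12|G21] := Ftot _ _ FG1 FG2.
  + case: (QG _ _ FG2 G2p) => _ H1 _ _ _; exact: H1 (G12 _ G1p) G2p.
  + case: (QG _ _ FG1 G1p) => _ H1 _ _ _; exact: H1 G1p (G21 _ G2p).
- move=> p y [G FG Gp]; case: (QG _ _ FG Gp) => _ _ + _ _.
  by move=> /(_ _ _ Gp) [D1 D2 D3]; split; apply: DU' FG _.
- move=> x x' /DU [G1 FG1 D1] /DU [G2 FG2 D2].
  have [G12|G21] := Ftot _ _ FG1 FG2.
  + have [q Gq] : exists q, G2 q by case: D2 => y Gy; exists ((x', x'), y).
    case: (QG _ _ FG2 Gq) => _ _ _ + _ => /(_ x x' (Dom_mono G12 _ D1) D2).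
    by move=> [y Gy]; exists y; exists G2.
  + have [q Gq] : exists q, G1 q by case: D1 => y Gy; exists ((x, x), y).
    case: (QG _ _ FG1 Gq) => _ _ _ + _ => /(_ x x' D1 (Dom_mono G21 _ D2)).
    by move=> [y Gy]; exists y; exists G1.
- case: ne => G [q [FG Gq]]; case: (QG _ _ FG Gq) => _ _ _ _.
  move=> [d0 [d1 [d2 [D0 D1 D2 Hd]]]].
  by exists d0, d1, d2; split => //; apply: DU' FG _.
Qed.


Lemma HQ_base : HQ [set q | exists m n, q = ((i m, i n), i (pickle (m, n)))].
Proof.
set G1 := [set q | _].
have D1 x : Dom G1 x <-> exists m, x = i m.
  split; first by move=> [y [m [n [E1 _ _]]]]; exists m.
  by move=> [m ->]; exists (i (pickle (m, m))); exists m, m.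
split.
- move=> p y y' [m [n E]] [m' [n' E']].
  case: E => ? ?; subst; case: E' => /ii ? /ii ? ?; subst => //.
- move=> p p' y [m [n E]] [m' [n' E']].
  case: E => ? ?; subst; case: E' => ? /ii /(pcan_inj (@pickleK _)) [? ?]; subst => //.
- move=> p y [m [n E]]; case: E => ? ?; subst => /=; split; apply/D1; eexists; reflexivity.
- move=> x x' /D1 [m ->] /D1 [n ->]; eexists; exists m, n; reflexivity.
- exists (i 0%N), (i 1%N), (i 2%N); split; try (apply/D1; eexists; reflexivity).
  by split => /ii.
Qed.

Lemma hessenberg : exists h : T * T -> T, injective h.
Proof.
have [G [PG Gmax]] := Zorn_bigcup HP_chain.
case: PG => [G0|QG].
  exfalso; apply: (Gmax _ _ (or_intror HQ_base)); split; first by rewrite G0.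
  move=> /(_ ((i 0%N, i 0%N), i (pickle (0%N, 0%N)))) H.
  by have := H (ex_intro _ 0%N (ex_intro _ 0%N erefl)); rewrite G0.
case: (QG) => Gfun Ginj Gcl Gtot [d0 [d1 [d2 [D0 D1 D2 [d01 d02 d12]]]]].
set D := Dom G.
pose Gf := choosef t0 (fun p y => G (p, y)).
have GfP x x' : D x -> D x' -> G ((x, x'), Gf (x, x')).
  by move=> Dx Dx'; exact: (choosefP t0 (R := fun p y => G (p, y)) (Gtot _ _ Dx Dx')).
have GfD x x' : D x -> D x' -> D (Gf (x, x')).
  by move=> Dx Dx'; case: (Gcl _ _ (GfP _ _ Dx Dx')).
have Gfinj x x' y y' : D x -> D x' -> D y -> D y' -> Gf (x, x') = Gf (y, y') ->
    x = y /\ x' = y'.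
  move=> Dx Dx' Dy Dy' E.
  have := GfP _ _ Dx Dx'; rewrite E => /(Ginj _ _ _) /(_ (GfP _ _ Dy Dy')).
  by case=> -> ->.
case: (@comparability _ t0 D (~` D)) => [[f0 [f0D f0inj]] | [f1 [f1D f1inj]]]; last first.
  pose u x := if pselect (D x) then Gf (x, d0) else Gf (f1 x, d1).
  have uD x : D (u x) by rewrite /u; case: pselect => Dx; apply: (GfD) => //; apply: (f1D).
  have uinj x y : u x = u y -> x = y.
    rewrite /u; case: pselect => Dx; case: pselect => Dy.
    - by move=> E; case: (Gfinj _ _ _ _ Dx D0 Dy D0 E).
    - by move=> E; case: (Gfinj _ _ _ _ Dx D0 (f1D _ Dy) D1 E).
    - by move=> E; case: (Gfinj _ _ _ _ (f1D _ Dx) D1 Dy D0 E) => _ /esym.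
    - move=> E; case: (Gfinj _ _ _ _ (f1D _ Dx) D1 (f1D _ Dy) D1 E) => E1 _.
      exact: f1inj E1.
  exists (fun p => Gf (u p.1, u p.2)) => -[a b] [a' b'] /= /Gfinj [] //.
  by move=> /uinj -> /uinj ->.
exfalso.
pose C := f0 @` D.
pose finv := choosef t0 (fun c x => D x /\ f0 x = c).
have finvP c : C c -> D (finv c) /\ f0 (finv c) = c.
  by move=> [x Dx E]; exact: (choosefP t0 (R := fun c x => D x /\ f0 x = c) (ex_intro _ x (conj Dx E))).
have CnD c : C c -> ~ D c by move=> [x Dx <-]; apply: f0D.
pose back x := if pselect (D x) then x else finv x.
have backD x : D x \/ C x -> D (back x).
  by rewrite /back; case: pselect => // Dx [//|/finvP []].
have backinj x y : (D x \/ C x) -> (D y \/ C y) -> (D x <-> D y) -> back x = back y -> x = y.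
  rewrite /back => Hx Hy Dxy; case: pselect => Dx; case: pselect => Dy //.
  - by case: Dy; apply/Dxy.
  - by case: Dx; apply/Dxy.
  - case: Hx => // Cx; case: Hy => // Cy.
    by move=> /= E; rewrite -(finvP _ Cx).2 -(finvP _ Cy).2 E.
pose tag (p : T * T) := if pselect (D p.1) then d0 else if pselect (D p.2) then d1 else d2.
have tagD p : D (tag p) by rewrite /tag; case: pselect => ?; last case: pselect => ?.
pose g p := f0 (Gf (tag p, Gf (back p.1, back p.2))).
pose E (p : T * T) := [/\ D p.1 \/ C p.1, D p.2 \/ C p.2 & ~ (D p.1 /\ D p.2)].
have gC p : E p -> C (g p).
  move=> [H1 H2 _]; exists (Gf (tag p, Gf (back p.1, back p.2))) => //.
  by apply: (GfD) => //; apply: (GfD); apply: (backD).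
have ginj p p' : E p -> E p' -> g p = g p' -> p = p'.
  case: p p' => [a b] [a' b'] [/= Ha Hb nab] [/= Ha' Hb' nab'].
  move=> /f0inj; rewrite /=.
  have G1 : D (Gf (tag (a, b), Gf (back a, back b))).
    by apply: (GfD) => //; apply: (GfD); apply: (backD).
  have G2 : D (Gf (tag (a', b'), Gf (back a', back b'))).
    by apply: (GfD) => //; apply: (GfD); apply: (backD).
  move=> /(_ G1 G2) /Gfinj [] //; try (by apply: (GfD); apply: (backD)).
  move=> Etag /Gfinj [] //; try (by apply: (backD)).
  move=> Ea Eb.
  have [DDa DDb] : (D a <-> D a') /\ (D b <-> D b').
    move: Etag; rewrite /tag /=.
    case: pselect => Da; case: pselect => Da'; try (case: pselect => Db);
      try (case: pselect => Db'); move=> //;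
      try (move=> /d01 //); try (move=> /d02 //); try (move=> /d12 //);
      try (move=> /esym /d01 //); try (move=> /esym /d02 //); try (move=> /esym /d12 //);
      try (move=> _); split; split => // _; exfalso; tauto.
  by rewrite (backinj _ _ Ha Ha' DDa Ea) (backinj _ _ Hb Hb' DDb Eb).
pose G' := G `|` [set q | E q.1 /\ q.2 = g q.1].
have DomG' x : Dom G' x <-> D x \/ C x.
  split.
    move=> [y [Gy|[[H1 _ _] _]]] //; left; by exists y.
  move=> [Dx|Cx]; first by case: Dx => y Gy; exists y; left.
  exists (g (x, x)); right; split => //; split => //=; [by right|by right|].
  by move=> [/(CnD _ Cx)].
have Cf0 : C (f0 d0) by exists d0.
apply: (Gmax G').
  split; first by move=> q Gq; left.
  move=> /(_ ((f0 d0, f0 d0), g (f0 d0, f0 d0))) H.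
  have : G ((f0 d0, f0 d0), g (f0 d0, f0 d0)).
    apply: H; right; split => //; split => //=; [by right|by right|].
    by move=> [/(CnD _ Cf0)].
  by move=> /Gcl [/= /(CnD _ Cf0)].
have G'E p y : G' (p, y) -> G (p, y) \/ (E p /\ y = g p) by [].
right; split.
- move=> p y y' /G'E [Gy|[Ep ->]] /G'E [Gy'|[Ep' ->]] //.
  + exact: Gfun Gy Gy'.
  + by case: Ep' => _ _ []; case: (Gcl _ _ Gy).
  + by case: Ep => _ _ []; case: (Gcl _ _ Gy').
- move=> p p' y /G'E [Gy|[Ep ->]] /G'E [Gy'|[Ep' Ey]].
  + exact: Ginj Gy Gy'.
  + by case: (Gcl _ _ Gy) => _ _; rewrite Ey => /(CnD _ (gC _ Ep')).
  + by case: (Gcl _ _ Gy') => _ _ /(CnD _ (gC _ Ep)).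
  + exact: ginj.
- move=> p y /G'E [Gy|[Ep ->]].
  + by case: (Gcl _ _ Gy) => ? ? ?; split; apply/DomG'; left.
  + case: (Ep) => H1 H2 _; split; apply/DomG' => //.
    by right; apply: (gC).
- move=> x x' /DomG' Hx /DomG' Hx'.
  have [[Dx Dx']|nD] := pselect (D x /\ D x').
    by case: (Gtot _ _ Dx Dx') => y Gy; exists y; left.
  by exists (g (x, x')); right.
- by exists d0, d1, d2; split => //; apply/DomG'; left.
Qed.

End Hess.

Import Order.TTheory GRing.Theory Num.Theory.
Local Open Scope ring_scope.
Set Implicit Arguments. Unset Strict Implicit.

Definition catf {T : Type} {n m} (f : 'I_n -> T) (g : 'I_m -> T) (i : 'I_(n + m)) : T :=
  match fintype.split i with inl j => f j | inr j => g j end.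

Lemma catf_sum (T : Type) (V : nmodType) n m (f : 'I_n -> T) (g : 'I_m -> T)
  (P : pred T) (F : T -> V) :
  \sum_(i < n + m | P (catf f g i)) F (catf f g i) =
  \sum_(i < n | P (f i)) F (f i) + \sum_(i < m | P (g i)) F (g i).
Proof.
rewrite big_split_ord /catf; congr (_ + _); apply: eq_big => i.
- by rewrite (unsplitK (inl i : 'I_n + 'I_m)).
- by rewrite (unsplitK (inl i : 'I_n + 'I_m)).
- by rewrite (unsplitK (inr i : 'I_n + 'I_m)).
- by rewrite (unsplitK (inr i : 'I_n + 'I_m)).
Qed.

Section Rep.
Variables (B : Type) (n : nat) (f : 'I_n -> B).
Definition rep (s : 'I_n) : 'I_n := [arg min_(s' < s | `[< f s' = f s >]) val s'].

Lemma repP s : f (rep s) = f s.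
Proof.
rewrite /rep; case: arg_minnP; first exact/asboolP.
by move=> i /asboolP.
Qed.

Lemma rep_eq s s' : f s = f s' -> rep s = rep s'.
Proof.
move=> E; rewrite /rep.
case: arg_minnP; first exact/asboolP.
move=> i /asboolP fi imin.
case: arg_minnP; first exact/asboolP.
move=> j /asboolP fj jmin.
apply/val_inj/eqP; rewrite eqn_leq imin ?jmin //; apply/asboolP; congruence.
Qed.

Lemma rep_idem s : rep (rep s) = rep s.
Proof. by apply: rep_eq; rewrite repP. Qed.

Lemma rep_eqE s r : rep r = r -> (rep s == r) = `[< f s = f r >].
Proof.
move=> rr; apply/eqP/asboolP => [<-|E]; first by rewrite repP.
by rewrite -rr; apply: rep_eq.
Qed.

Lemma class_sum0 (V : nmodType) (c : 'I_n -> V) (P : pred 'I_n) :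
  (forall s s', f s = f s' -> P s = P s') ->
  (forall s, P s -> \sum_(s' < n | `[< f s' = f s >]) c s' = 0) ->
  \sum_(s < n | P s) c s = 0.
Proof.
move=> Pc H.
rewrite (partition_big rep (fun r => rep r == r)) /=; last by move=> i _; rewrite rep_idem.
apply: big1 => r /eqP rr.
have [Pr|nPr] := boolP (P r).
  rewrite -[RHS](H r Pr); apply: eq_bigl => s.
  rewrite rep_eqE //; case: asboolP => E; first by rewrite (Pc _ _ E) Pr.
  by rewrite andbF.
apply: big1 => s /andP [Ps /eqP E]; exfalso; move/negP: nPr; apply.
by rewrite -(Pc s) // -E repP.
Qed.

Lemma regroup (K : numFieldType) (V : lmodType K) (c : 'I_n -> K) (v : B -> V) :
  \sum_(s < n) c s *: v (f s) =
  \sum_(r < n | rep r == r) (\sum_(s < n | `[< f s = f r >]) c s) *: v (f r).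
Proof.
rewrite (partition_big rep (fun r => rep r == r)) /=; last by move=> i _; rewrite rep_idem.
apply: eq_bigr => r /eqP rr; rewrite scaler_suml; apply: eq_big => s.
  by rewrite rep_eqE.
by move=> /eqP E; rewrite -(repP s) E.
Qed.

Lemma regroup0 (K : numFieldType) (V : lmodType K) (c : 'I_n -> K) (v : B -> V) :
  (forall s0, \sum_(s < n | `[< f s = f s0 >]) c s = 0) ->
  \sum_(s < n) c s *: v (f s) = 0.
Proof. by move=> H; rewrite regroup big1 // => r _; rewrite H scale0r. Qed.

End Rep.

Lemma GI (K : numFieldType) (X : topologicalLmodType K) (B : Type) (b : B -> X) :
  lin_indep b -> forall n (f : 'I_n -> B) (c : 'I_n -> K),
  \sum_(s < n) c s *: b (f s) = 0 -> forall a, \sum_(s < n | `[< f s = a >]) c s = 0.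
Proof.
move=> bi n f c H a.
have [[s0 <-]|na] := pselect (exists s0, f s0 = a); last first.
  by rewrite big_pred0 // => s; apply/asboolP => E; apply: na; exists s.
pose P := [pred r | rep f r == r].
move: H; rewrite regroup (eq_bigl (fun r => r \in P)); last by move=> r; rewrite inE.
rewrite big_enum_val => H.
have := bi _ (fun i : 'I_#|P| => f (enum_val i)) _ _ H.
have Pr0 : rep f s0 \in P by rewrite inE rep_idem.
have injf : injective (fun i : 'I_#|P| => f (enum_val i)).
  move=> i j /= E.
  have Pi := enum_valP i; have Pj := enum_valP j.
  rewrite !inE in Pi Pj.
  apply: enum_val_inj; rewrite -(eqP Pi) -(eqP Pj); exact: rep_eq.
move=> /(_ injf (enum_rank_in Pr0 (rep f s0))).
rewrite (enum_rankK_in Pr0 Pr0) (repP f s0); exact.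
Qed.

Lemma family_indep (K : numFieldType) (X : topologicalLmodType K) (B J : Type)
  (b : B -> X) (src psi : J -> B) (t : J -> K) (rk : B -> nat) :
  lin_indep b -> injective psi -> (forall j, t j != 0) ->
  (forall j, rk (psi j) = (rk (src j)).+1) ->
  forall n (g : 'I_n -> J) (c : 'I_n -> K),
  \sum_(s < n) c s *: (b (src (g s)) + t (g s) *: b (psi (g s))) = 0 ->
  forall s0, \sum_(s < n | `[< g s = g s0 >]) c s = 0.
Proof.
move=> bi psii tn0 rkE n g c H s0.
pose Cl s0 := \sum_(s < n | `[< g s = g s0 >]) c s.
apply/eqP/negPn/negP => Cs0.
case: (@arg_maxnP _ s0 (fun s => Cl s != 0) (fun s => rk (psi (g s))) Cs0).
move=> ss Css ssmax.
pose p1 (s : 'I_n) := (c s, src (g s)).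
pose p2 (s : 'I_n) := (c s * t (g s), psi (g s)).
have H0 : \sum_(i < n + n) (catf p1 p2 i).1 *: b (catf p1 p2 i).2 = 0.
  have := catf_sum p1 p2 xpredT (fun q => q.1 *: b q.2); rewrite /= => ->.
  rewrite -big_split /= -[RHS]H; apply: eq_bigr => s _.
  by rewrite scalerDr scalerA.
have := GI bi H0 (psi (g ss)).
have := catf_sum p1 p2 (fun q => `[< q.2 = psi (g ss) >]) fst; rewrite /= => ->.
rewrite (@class_sum0 _ _ g); first last.
- move=> s /asboolP Es; apply/eqP/negPn/negP => Cs.
  by have := ssmax s Cs; rewrite /= (rkE (g s)) Es ltnn.
- by move=> s s' ->.
rewrite add0r (eq_bigl (fun s => `[< g s = g ss >])); last first.
  move=> s; apply/asboolP/asboolP => [/psii //|-> //].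
rewrite (eq_bigr (fun s => c s * t (g ss))); last by move=> s /asboolP ->.
rewrite -mulr_suml => /eqP; rewrite mulf_eq0 (negbTE (tn0 _)) orbF.
by move=> E; move: Css; rewrite /Cl E.
Qed.

Section Span.
Variables (K : numFieldType) (X : topologicalLmodType K).

Lemma span_sum (Y : set X) n (c : 'I_n -> K) (v : 'I_n -> X) :
  lin_subspace Y -> (forall i, Y (v i)) -> Y (\sum_(i < n) c i *: v i).
Proof.
move=> [Y0 [YD YZ]] Yv; elim: n c v Yv => [|n IH] c v Yv; first by rewrite big_ord0.
rewrite big_ord_recr /=; apply: YD; last exact: YZ.
exact: IH (fun i => c (widen_ord (leqnSn n) i)) (fun i => v (widen_ord (leqnSn n) i)) _.
Qed.

Lemma span_sub (B : Type) (Y : set X) (v : B -> X) :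
  lin_subspace Y -> (forall j, Y (v j)) -> lin_span v `<=` Y.
Proof. by move=> sY Yv x [n [f [c ->]]]; apply: span_sum. Qed.

Lemma span_in (B : Type) (v : B -> X) j : lin_span v (v j).
Proof.
exists 1%N, (fun _ => j), (fun _ => 1).
by rewrite big_ord1 scale1r.
Qed.

Lemma span_subspace (B : Type) (v : B -> X) : lin_subspace (lin_span v).
Proof.
split; [|split].
- have f0 : 'I_0 -> B by case=> m; rewrite ltn0.
  by exists 0%N, f0, (fun _ => 0); rewrite big_ord0.
- move=> x y [n [f [c ->]]] [m [g [d ->]]].
  exists (n + m)%N, (fun i => (catf (fun s => (c s, f s)) (fun s => (d s, g s)) i).2).
  exists (fun i => (catf (fun s => (c s, f s)) (fun s => (d s, g s)) i).1).
  by have := catf_sum (fun s => (c s, f s)) (fun s => (d s, g s)) xpredT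
    (fun q => q.1 *: v q.2); rewrite /= => ->.
- move=> a x [n [f [c ->]]]; exists n, f, (fun i => a * c i).
  by rewrite scaler_sumr; apply: eq_bigr => i _; rewrite scalerA.
Qed.
End Span.

Section T.
Variables (K : numFieldType) (X : topologicalLmodType K).
Lemma nbhs_add_scale (c : K) (u v : X) (O : set X) :
  nbhs (u + c *: v) O -> exists U V, nbhs u U /\ nbhs v V /\
    forall p q, U p -> V q -> O (p + c *: q).
Proof.
move=> Ouv.
have := add_continuous (u, c *: v) O Ouv => -[[B1 B2]] /= [B1u B2v] B12.
have := @scale_continuous K X (c, v) B2 B2v => -[[C1 C2]] /= [C1c C2v] C12.
exists B1, C2; split => //; split => // p q B1p C2q.
apply: (B12 (p, c *: q)); split => //=.
apply: (C12 (c, q)); split => //=.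
exact: (nbhs_singleton C1c).
Qed.

Lemma small_perturb (y z : X) (O : set X) :
  nbhs y O -> exists t : K, t != 0 /\ O (y + t *: z).
Proof.
move=> Oy.
have := add_continuous (y, 0) O; rewrite /= addr0 => /(_ Oy) -[[B1 B2]] /= [B1u B2v] B12.
have := @scale_continuous K X (0, z) B2; rewrite /= scale0r => /(_ B2v) -[[C1 C2]] /= [C1c C2v] C12.
move: C1c => /nbhs_ballP[e /= e0 eC].
exists (e / 2); split; first by rewrite mulf_neq0 ?invr_eq0 ?gt_eqF // ?pnatr_eq0.
apply: (B12 (y, (e/2) *: z)); split => //=; first exact: nbhs_singleton.
apply: (C12 (e/2, z)); split => //=; last exact: nbhs_singleton.
apply: eC.
rewrite /ball /= sub0r normrN ger0_norm ?divr_ge0 ?ltW //.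
by rewrite ltr_pdivrMr // ltr_pMr // ltr1n.
Qed.
End T.


Lemma dense_span (K : numFieldType) (X : topologicalLmodType K) (A J : Type)
  (b : A -> X) (Bs : A -> set X) (x : J -> X) :
  dense (lin_span b) ->
  (forall (U : set X) (y : X), open U -> U y -> exists a, Bs a y /\ Bs a `<=` U) ->
  (forall i a, Bs a (b i) -> exists j, Bs a (x j)) -> dense (lin_span x).
Proof.
move=> dY base hit.
have key : forall n (c : 'I_n -> K) (f : 'I_n -> A) (O : set X),
    nbhs (\sum_(s < n) c s *: b (f s)) O -> exists z, O z /\ lin_span x z.
  elim=> [|n IH] c f O.
    rewrite big_ord0 => /nbhs_singleton O0; exists 0; split => //.
    exact: (span_subspace x).1.
  rewrite big_ord_recr /= => /nbhs_add_scale [U [V [Uu [Vv UV]]]].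
  have [z1 [Uz1 Sz1]] := IH (fun i => c (widen_ord (leqnSn n) i))
    (fun i => f (widen_ord (leqnSn n) i)) U Uu.
  have [a [Ba BV]] := base (V°) (b (f ord_max)) (@open_interior _ V)
    (nbhs_singleton (nbhs_interior Vv)).
  have [j Bj] := hit _ _ Ba.
  exists (z1 + c ord_max *: x j); split.
    by apply: UV => //; apply: interior_subset; exact: BV.
  case: (span_subspace x) => _ [sD sZ]; apply: sD => //; apply: sZ.
  exact: span_in.
move=> O O0 oO; have [y [Oy [n [f [c Ey]]]]] := dY O O0 oO.
have := key n c f O; rewrite -Ey => /(_ (open_nbhs_nbhs (conj oO Oy))).
by move=> [z [Oz Sz]]; exists z.
Qed.

Theorem theorem3p2 (K : numFieldType) (X : topologicalLmodType K)
  (M : set X) (A : Type) :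
  infinite_card A -> weight_le X A ->
  (dense_lineable A M <-> inf_dense_lineable A A M).
Proof.
move=> [i ii] [Bs [oB base]]; split; last first.
  by move=> [Y [HY _]]; exists (Y (i 0%N)); exact: HY.
move=> [Y [sY [dY [[b [bi bY]] YM]]]].
have [h hinj] := @hessenberg _ _ ii.
pose a0 := i 0%N.
pose pr := choosef (a0, a0) (fun j p => h p = j).
have prK p : pr (h p) = p.
  apply: hinj; exact: (choosefP (a0, a0) (R := fun j p => h p = j) (ex_intro _ p erefl)).
pose L (n : nat) (x : A) := h (i n, x).
pose rk := choosef 0%N (fun j n => exists x, L n x = j).
have rkL n x : rk (L n x) = n.
  have := choosefP 0%N (R := fun j n => exists x, L n x = j) (ex_intro _ n (ex_intro _ x erefl)).
  by move=> [x' /hinj [/ii]].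
pose src (p : A * A) := (pr p.2).1.
pose opn (p : A * A) := (pr p.2).2.
pose psi (p : A * A) := L (rk (src p)).+1 (h p).
have psii : injective psi.
  by move=> p p' /hinj [_ /hinj].
have rkE p : rk (psi p) = (rk (src p)).+1 by exact: rkL.
pose R := fun (p : A * A) (t : K) => t != 0 /\
  (Bs (opn p) (b (src p)) -> Bs (opn p) (b (src p) + t *: b (psi p))).
pose t := choosef 1 R.
have tP p : R p (t p).
  apply: choosefP; have [H|H] := pselect (Bs (opn p) (b (src p))).
    have [t' [t0 Ht]] := small_perturb (b (psi p)) (open_nbhs_nbhs (conj (oB _) H)).
    by exists t'; split.
  by exists 1; split => //; exact: oner_neq0.
pose xf (p : A * A) := b (src p) + t p *: b (psi p).
have tn0 p : t p != 0 by case: (tP p).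
have FI := family_indep bi psii tn0 rkE.
exists (fun k => lin_span (fun j => xf (k, j))); split.
  move=> k; split; first exact: span_subspace.
  split.
    apply: (@dense_span _ _ A A b Bs) => //; first by rewrite bY.
    move=> i0 a Ba; exists (h (i0, a)).
    have := (tP (k, h (i0, a))).2; rewrite /R /opn /src /= prK /=.
    by move=> /(_ Ba); rewrite /xf /src /= prK.
  split.
    exists (fun j => xf (k, j)); split => //.
    move=> n f c finj H s0.
    have := FI n (fun s => (k, f s)) c H s0.
    rewrite (big_pred1 s0) // => s /=.
    apply/asboolP/eqP => [[/finj]|->] //.
  move=> z Hz; apply: YM; apply: span_sub Hz => // j.
  rewrite -bY; case: (span_subspace b) => _ [sD sZ].
  by apply: sD; [exact: span_in|apply: sZ; exact: span_in].
move=> k1 k2 k12; apply/seteqP; split => z; last first.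
  by move=> ->; split; exact: (span_subspace _).1.
move=> [[n [f [c Ez]]] [m [f' [d Ez']]]].
pose q1 (s : 'I_n) := (c s, (k1, f s)).
pose q2 (s : 'I_m) := (- d s, (k2, f' s)).
have H0 : \sum_(s < n + m) (catf q1 q2 s).1 *:
    (b (src (catf q1 q2 s).2) + t (catf q1 q2 s).2 *: b (psi (catf q1 q2 s).2)) = 0.
  have := catf_sum q1 q2 xpredT (fun q => q.1 *: xf q.2); rewrite /= => ->.
  rewrite /q1 /q2 /=.
  rewrite (eq_bigr (fun s => - (d s *: xf (k2, f' s)))); last by move=> s _; rewrite scaleNr.
  by rewrite sumrN -Ez -Ez' subrr.
have FI0 := FI _ _ _ H0.
rewrite /= Ez; apply: regroup0 => s0.
have := FI0 (lshift m s0).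
have Eq : (catf q1 q2 (lshift m s0)).2 = (k1, f s0).
  by rewrite /catf (unsplitK (inl s0 : 'I_n + 'I_m)).
rewrite Eq.
have := catf_sum q1 q2 (fun q => `[< q.2 = (k1, f s0) >]) fst; rewrite /= => ->.
rewrite (@big_pred0 _ _ _ _ _ (fun s : 'I_m => `[< (k2, f' s) = (k1, f s0) >])); last first.
  by move=> s; apply/asboolP => -[E _]; apply: k12.
rewrite addr0 => E; rewrite -[RHS]E; apply: eq_bigl => s.
by apply/asboolP/asboolP => [->|[->]].
Qed.
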